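(* Let $M\ge 0$, $\mathcal{M}=\{0,\dots,M\}$, $T\ge 1$, $c_u,c_l>0$, $0\le\beta\le 1$, and let $P=(P_{i,j})_{i,j\in\mathcal{M}}$ be a stochastic matrix with rows $P_{i,\cdot}$. For a probability vector $b$ on $\mathcal{M}$ and $r\in\mathcal{M}$ let $$\bar C(b;r)=c_l\sum_{i=r}^{M} b(i)(i-r)+c_u\sum_{i=0}^{r-1} b(i)(r-i),$$ and, when $\sum_{j=r}^M b(j)>0$, let $T_r[b]$ be the probability vector with $T_r[b](i)=0$ for $i<r$ and $T_r[b](i)=b(i)/\sum_{j=r}^M b(j)$ for $i\ge r$ (viewed as a row vector, so $T_r[b]P$ is a probability vector). Define value functions on probability vectors recursively by $$V_T(b;r)=\bar C(b;r),\qquad V_t(b)=\min_{r\in\mathcal{M}}V_t(b;r),$$ $$V_t(b;r)=\bar C(b;r)+\beta\Big[\Big(\sum_{i=r}^M b(i)\Big)V_{t+1}(T_r[b]P)+\sum_{i=0}^{r-1} b(i)\,V_{t+1}(P_{i,\cdot})\Big],\quad t<T,$$ where the first term in brackets is taken to be $0$ when $\sum_{i=r}^M b(i)=0$. Then for every $t\in\{1,\dots,T\}$, every $r\in\mathcal{M}$, all probability vectors $b_1,b_2$ and every $\lambda\in[0,1]$, $$V_t(\lambda b_1+(1-\lambda)b_2;r)\ge \lambda V_t(b_1;r)+(1-\lambda)V_t(b_2;r),$$ $$V_t(\lambda b_1+(1-\lambda)b_2)\ge \lambda V_t(b_1)+(1-\lambda)V_t(b_2).$$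
   Context: This is the belief-based dynamic program for tracking a Markov chain $B_t$ on $\mathcal{M}$ with transition matrix $P$: choosing action $r$ costs $c_u(r-B_t)$ if $r>B_t$ (and then $B_t$ is fully observed) and $c_l(B_t-r)$ if $r\le B_t$ (and then only the event $B_t\ge r$ is observed); $b$ is the posterior distribution of the current state. *)

(* Defs.v *)
From mathcomp Require Import all_boot all_order all_algebra.
Set Implicit Arguments. Unset Strict Implicit. Unset Printing Implicit Defensive.
Import Order.TTheory GRing.Theory Num.Theory.
Local Open Scope ring_scope.

Section Defs.
Variables (R : realFieldType) (M : nat).
Notation S := 'I_M.+1.
Notation belief := {ffun S -> R}.

Definition prob_vec (b : belief) : Prop :=
  (forall i, 0 <= b i) /\ \sum_i b i = 1.

Definition stochastic (P : 'M[R]_M.+1) : Prop :=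
  (forall i j, 0 <= P i j) /\ (forall i, \sum_j P i j = 1).

Definition massge (b : belief) (r : S) : R := \sum_(i : S | (r <= i)%N) b i.

Definition Cbar (cu cl : R) (b : belief) (r : S) : R :=
  cl * (\sum_(i : S | (r <= i)%N) b i * (i%:R - r%:R))
  + cu * (\sum_(i : S | (i < r)%N) b i * (r%:R - i%:R)).

Definition Tr (b : belief) (r : S) : belief :=
  [ffun i : S => if (r <= i)%N then b i / massge b r else 0].

Definition bP (P : 'M[R]_M.+1) (b : belief) : belief :=
  [ffun j : S => \sum_i b i * P i j].

Definition rowP (P : 'M[R]_M.+1) (i : S) : belief := [ffun j => P i j].

Definition minr_act (f : S -> R) : R := \big[Order.min/f ord0]_(r : S) f r.

(* Vr n b r = V_{T-n}(b;r) : value function with n steps to go. *)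
Fixpoint Vr (cu cl beta : R) (P : 'M[R]_M.+1) (n : nat) (b : belief) (r : S)
  : R :=
  match n with
  | 0 => Cbar cu cl b r
  | n'.+1 =>
      let V' := fun b' => minr_act (Vr cu cl beta P n' b') in
      Cbar cu cl b r
      + beta * ((if massge b r > 0 then massge b r * V' (bP P (Tr b r)) else 0)
                + \sum_(i : S | (i < r)%N) b i * V' (rowP P i))
  end.

Definition Vtr cu cl beta P (T t : nat) b r := Vr cu cl beta P (T - t) b r.
Definition Vt cu cl beta P (T t : nat) b := minr_act (Vtr cu cl beta P T t b).

End Defs.

(* Main.v *)
Require Import Defs.
From mathcomp Require Import all_boot all_order all_algebra.
From mathcomp Require Import ring lra.
Import Order.TTheory GRing.Theory Num.Theory.
Set Implicit Arguments. Unset Strict Implicit. Unset Printing Implicit Defensive.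
Local Open Scope ring_scope.

Definition mixb (R : realFieldType) (M : nat) (lam : R) (b1 b2 : {ffun 'I_M.+1 -> R}) :
  {ffun 'I_M.+1 -> R} := [ffun i => lam * b1 i + (1 - lam) * b2 i].

Lemma sum_mix (R : realFieldType) (M : nat) (lam : R) (b1 b2 : {ffun 'I_M.+1 -> R})
  (p : pred 'I_M.+1) (f : 'I_M.+1 -> R) :
  \sum_(i | p i) mixb lam b1 b2 i * f i =
  lam * \sum_(i | p i) b1 i * f i + (1 - lam) * \sum_(i | p i) b2 i * f i.
Proof.
rewrite !mulr_sumr -big_split; apply: eq_bigr => i _; rewrite ffunE.
rewrite /=; ring.
Qed.

Lemma sum_mix1 (R : realFieldType) (M : nat) (lam : R) (b1 b2 : {ffun 'I_M.+1 -> R})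
  (p : pred 'I_M.+1) :
  \sum_(i | p i) mixb lam b1 b2 i =
  lam * \sum_(i | p i) b1 i + (1 - lam) * \sum_(i | p i) b2 i.
Proof.
rewrite !mulr_sumr -big_split; apply: eq_bigr => i _; rewrite ffunE /=; ring.
Qed.

Lemma massge_mix (R : realFieldType) (M : nat) (lam : R) (b1 b2 : {ffun 'I_M.+1 -> R}) r :
  massge (mixb lam b1 b2) r = lam * massge b1 r + (1 - lam) * massge b2 r.
Proof. exact: sum_mix1. Qed.

Lemma Cbar_mix (R : realFieldType) (M : nat) cu cl (lam : R) (b1 b2 : {ffun 'I_M.+1 -> R}) r :
  Cbar cu cl (mixb lam b1 b2) r = lam * Cbar cu cl b1 r + (1 - lam) * Cbar cu cl b2 r.
Proof. rewrite /Cbar !sum_mix; ring. Qed.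

Lemma prob_mix (R : realFieldType) (M : nat) (lam : R) (b1 b2 : {ffun 'I_M.+1 -> R}) :
  prob_vec b1 -> prob_vec b2 -> 0 <= lam <= 1 -> prob_vec (mixb lam b1 b2).
Proof.
move=> [h1 s1] [h2 s2] /andP[l0 l1]; split.
  move=> i; rewrite ffunE addr_ge0 // mulr_ge0 //; by [rewrite h1| rewrite subr_ge0| ].
rewrite (sum_mix1 lam b1 b2 xpredT) s1 s2; ring.
Qed.

Lemma massge_ge0 (R : realFieldType) (M : nat) (b : {ffun 'I_M.+1 -> R}) r :
  prob_vec b -> 0 <= massge b r.
Proof. by move=> [h _]; apply: sumr_ge0. Qed.

Lemma prob_bPTr (R : realFieldType) (M : nat) (P : 'M[R]_M.+1) (b : {ffun 'I_M.+1 -> R}) r :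
  stochastic P -> prob_vec b -> 0 < massge b r -> prob_vec (bP P (Tr b r)).
Proof.
move=> [Pp Ps] [h s] m0; split.
  move=> j; rewrite ffunE; apply: sumr_ge0 => i _; apply: mulr_ge0 => //.
  rewrite ffunE; case: ifP => // _; apply: divr_ge0 => //; exact: ltW.
under eq_bigr => j _ do rewrite ffunE.
rewrite exchange_big /=.
under eq_bigr => i _ do rewrite -mulr_sumr Ps mulr1.
under eq_bigr => i _ do rewrite ffunE.
rewrite -big_mkcond /= -mulr_suml -/(massge b r) divff //.
by rewrite gt_eqF.
Qed.
Definition Fm (R : realFieldType) (M : nat) (P : 'M[R]_M.+1) (V : {ffun 'I_M.+1 -> R} -> R)
  (b : {ffun 'I_M.+1 -> R}) r :=
  if 0 < massge b r then massge b r * V (bP P (Tr b r)) else 0.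

Definition concave_on (R : realFieldType) (M : nat) (V : {ffun 'I_M.+1 -> R} -> R) :=
  forall y1 y2 (mu : R), prob_vec y1 -> prob_vec y2 -> 0 <= mu <= 1 ->
  mu * V y1 + (1 - mu) * V y2 <= V (mixb mu y1 y2).

Lemma Fm_degen (R : realFieldType) (M : nat) (P : 'M[R]_M.+1) V b1 b2 (lam : R) r :
  prob_vec b1 -> prob_vec b2 -> 0 <= lam <= 1 -> lam * massge b1 r = 0 ->
  lam * Fm P V b1 r + (1 - lam) * Fm P V b2 r <= Fm P V (mixb lam b1 b2) r.
Proof.
move=> pb1 pb2 /andP[l0 l1] hz.
have m1g := massge_ge0 r pb1; have m2g := massge_ge0 r pb2.
have F1 : lam * Fm P V b1 r = 0.
  move: hz => /eqP; rewrite mulf_eq0 => /orP[/eqP-> | /eqP m1]; first by rewrite mul0r.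
  by rewrite /Fm m1 ltxx mulr0.
have hb : forall i : 'I_M.+1, (r <= i)%N -> lam * b1 i = 0.
  move=> i ri; move: hz => /eqP; rewrite mulf_eq0 => /orP[/eqP-> | /eqP m1]; first by rewrite mul0r.
  have := psumr_eq0P (fun j _ => (proj1 pb1) j) m1; move=> H; by rewrite H ?mulr0.
rewrite F1 add0r.
have em : massge (mixb lam b1 b2) r = (1 - lam) * massge b2 r by rewrite massge_mix hz add0r.
rewrite /Fm em.
have l1' : 0 <= 1 - lam by rewrite subr_ge0.
case: (ltrP 0 ((1 - lam) * massge b2 r)) => hp.
  have m2p : 0 < massge b2 r.
    by rewrite lt_def; apply/andP; split => //; apply/eqP=> e; move: hp; rewrite e mulr0 ltxx.
  have lp : 0 < 1 - lam.
    by rewrite lt_def; apply/andP; split => //; apply/eqP=> e; move: hp; rewrite e mul0r ltxx.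
  rewrite m2p mulrA.
  have -> : Tr (mixb lam b1 b2) r = Tr b2 r.
    apply/ffunP => i; rewrite !ffunE; case: ifP => // ri.
    rewrite hb // add0r em; field.
    by rewrite (gt_eqF m2p) (gt_eqF lp).
  by [].
have e0 : (1 - lam) * massge b2 r = 0 by apply/le_anti; rewrite hp mulr_ge0.
case: ifP => _; [by rewrite mulrA e0 mul0r | by rewrite mulr0].
Qed.

Lemma bP_mix (R : realFieldType) (M : nat) (P : 'M[R]_M.+1) (mu : R) x1 x2 :
  bP P (mixb mu x1 x2) = mixb mu (bP P x1) (bP P x2).
Proof. apply/ffunP => j; rewrite !ffunE (sum_mix mu x1 x2 xpredT). by []. Qed.

Lemma mix_sym (R : realFieldType) (M : nat) (lam : R) (b1 b2 : {ffun 'I_M.+1 -> R}) :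
  mixb (1 - lam) b2 b1 = mixb lam b1 b2.
Proof. apply/ffunP => i; rewrite !ffunE; ring. Qed.

Lemma Fm_conc (R : realFieldType) (M : nat) (P : 'M[R]_M.+1) V b1 b2 (lam : R) r :
  stochastic P -> concave_on V ->
  prob_vec b1 -> prob_vec b2 -> 0 <= lam <= 1 ->
  lam * Fm P V b1 r + (1 - lam) * Fm P V b2 r <= Fm P V (mixb lam b1 b2) r.
Proof.
move=> sP cV pb1 pb2 hl; have /andP[l0 l1] := hl.
have m1g := massge_ge0 r pb1; have m2g := massge_ge0 r pb2.
have l1' : 0 <= 1 - lam by rewrite subr_ge0.
have [z1|nz1] := eqVneq (lam * massge b1 r) 0; first exact: Fm_degen.
have [z2|nz2] := eqVneq ((1 - lam) * massge b2 r) 0.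
  have h01 : 0 <= 1 - lam <= 1 by rewrite l1' /= lerBlDr lerDl.
  have H := @Fm_degen R M P V b2 b1 (1 - lam) r pb2 pb1 h01 z2.
  have e : 1 - (1 - lam) = lam by ring.
  by rewrite mix_sym e addrC in H.
have p1 : 0 < lam * massge b1 r by rewrite lt_def nz1 mulr_ge0.
have p2 : 0 < (1 - lam) * massge b2 r by rewrite lt_def nz2 mulr_ge0.
have m1p : 0 < massge b1 r.
  by rewrite lt_def m1g andbT; apply/eqP=> e; move: nz1; rewrite e mulr0 eqxx.
have m2p : 0 < massge b2 r.
  by rewrite lt_def m2g andbT; apply/eqP=> e; move: nz2; rewrite e mulr0 eqxx.
set m1 := massge b1 r in m1g m1p p1 nz1 *.
set m2 := massge b2 r in m2g m2p p2 nz2 *.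
have em : massge (mixb lam b1 b2) r = lam * m1 + (1 - lam) * m2 by rewrite massge_mix.
have mp : 0 < lam * m1 + (1 - lam) * m2 by rewrite addr_gt0.
set m := lam * m1 + (1 - lam) * m2 in em mp.
set mu := lam * m1 / m.
have hTr : Tr (mixb lam b1 b2) r = mixb mu (Tr b1 r) (Tr b2 r).
  apply/ffunP => i; rewrite !ffunE; case: ifP => _; last by rewrite !mulr0 addr0.
  rewrite em /mu /m -/m1 -/m2; field.
  by rewrite (gt_eqF m1p) (gt_eqF m2p) (gt_eqF mp).
rewrite /Fm em mp m1p m2p hTr bP_mix.
have mu01 : 0 <= mu <= 1.
  rewrite /mu divr_ge0 ?(ltW p1) ?(ltW mp) //= ler_pdivrMr // mul1r /m lerDl; exact: ltW.
have := cV _ _ mu (prob_bPTr sP pb1 m1p) (prob_bPTr sP pb2 m2p) mu01.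
move=> H; apply: le_trans (ler_wpM2l (ltW mp) H).
rewrite le_eqVlt; apply/orP; left; apply/eqP.
rewrite /mu /m -/m1 -/m2; field.
by rewrite (gt_eqF mp).
Qed.

Lemma min_conc (R : realFieldType) (M : nat) (f : {ffun 'I_M.+1 -> R} -> 'I_M.+1 -> R) :
  (forall b1 b2 (lam : R) r, prob_vec b1 -> prob_vec b2 -> 0 <= lam <= 1 ->
     lam * f b1 r + (1 - lam) * f b2 r <= f (mixb lam b1 b2) r) ->
  concave_on (fun b => minr_act (f b)).
Proof.
move=> H y1 y2 mu p1 p2 hm; have /andP[l0 l1] := hm.
have l1' : 0 <= 1 - mu by rewrite subr_ge0.
have key : forall r, mu * minr_act (f y1) + (1 - mu) * minr_act (f y2) <= f (mixb mu y1 y2) r.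
  move=> r; apply: le_trans (H _ _ _ r p1 p2 hm).
  by apply: lerD; apply: ler_wpM2l => //; apply: bigmin_le.
by apply: le_bigmin => // i _.
Qed.

Lemma Vr_conc (R : realFieldType) (M : nat) (cu cl beta : R) (P : 'M[R]_M.+1) n :
  0 <= beta -> stochastic P ->
  forall b1 b2 (lam : R) r, prob_vec b1 -> prob_vec b2 -> 0 <= lam <= 1 ->
  lam * Vr cu cl beta P n b1 r + (1 - lam) * Vr cu cl beta P n b2 r
    <= Vr cu cl beta P n (mixb lam b1 b2) r.
Proof.
move=> b0 sP; elim: n => [|n IH] b1 b2 lam r p1 p2 hl.
  by rewrite /= Cbar_mix.
set V' := fun b => minr_act (Vr cu cl beta P n b).
have E : forall b, Vr cu cl beta P n.+1 b r = Cbar cu cl b r + beta *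
   (Fm P V' b r + \sum_(i : 'I_M.+1 | (i < r)%N) b i * V' (Defs.rowP P i)) by [].
rewrite !E Cbar_mix (sum_mix lam b1 b2 (fun i : 'I_M.+1 => (i < r)%N)).
have cV : concave_on V' by apply: min_conc.
have := Fm_conc r sP cV p1 p2 hl => HF.
set S1 := \sum_(i | _) b1 i * _. set S2 := \sum_(i | _) b2 i * _.
set C1 := Cbar _ _ b1 r. set C2 := Cbar _ _ b2 r.
set F1 := Fm P V' b1 r. set F2 := Fm P V' b2 r. set F := Fm P V' _ r.
rewrite -subr_ge0.
have -> : lam * C1 + (1 - lam) * C2 + beta * (F + (lam * S1 + (1 - lam) * S2)) -
  (lam * (C1 + beta * (F1 + S1)) + (1 - lam) * (C2 + beta * (F2 + S2)))
  = beta * (F - (lam * F1 + (1 - lam) * F2)) by ring.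
by apply: mulr_ge0 => //; rewrite subr_ge0.
Qed.

Theorem lemma3 (R : realFieldType) (M T : nat) (cu cl beta : R)
  (P : 'M[R]_M.+1) :
  (1 <= T)%N -> 0 < cu -> 0 < cl -> 0 <= beta <= 1 -> stochastic P ->
  forall (t : nat), (1 <= t <= T)%N ->
  forall (b1 b2 : {ffun 'I_M.+1 -> R}) (lam : R),
  prob_vec b1 -> prob_vec b2 -> 0 <= lam <= 1 ->
  (forall r : 'I_M.+1,
     Vtr cu cl beta P T t [ffun i => lam * b1 i + (1 - lam) * b2 i] r
     >= lam * Vtr cu cl beta P T t b1 r + (1 - lam) * Vtr cu cl beta P T t b2 r)
  /\
  Vt cu cl beta P T t [ffun i => lam * b1 i + (1 - lam) * b2 i]
     >= lam * Vt cu cl beta P T t b1 + (1 - lam) * Vt cu cl beta P T t b2.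
Proof.
move=> _ _ _ /andP[b0 _] sP t _ b1 b2 lam p1 p2 hl.
have H : forall b1 b2 (lam : R) r, prob_vec b1 -> prob_vec b2 -> 0 <= lam <= 1 ->
  lam * Vtr cu cl beta P T t b1 r + (1 - lam) * Vtr cu cl beta P T t b2 r
    <= Vtr cu cl beta P T t (mixb lam b1 b2) r.
  by move=> c1 c2 mu r q1 q2 hm; rewrite /Vtr; apply: Vr_conc.
split; first by move=> r; apply: H.
exact: (min_conc H p1 p2 hl).
Qed.
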